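(* Let $n$ be a security parameter and $F\colon\{0,1\}^{\tilde n}\to\{0,1\}^m$ a function. For $t\in\mathrm{poly}(n)$ let $F^t(x_1,\ldots,x_t)=(F(x_1),\ldots,F(x_t))$ be the $t$-fold direct product of $F$. Then: (i) if $F^{-1}$ has real Shannon entropy at least $k$, then $(F^t)^{-1}$ has real min-entropy at least $t\cdot k-\tilde n\sqrt{st}$ for any $s=\omega(\log n)$ and $t>s$; (ii) if $F^{-1}$ has accessible average max-entropy at most $k$, then $(F^t)^{-1}$ has accessible max-entropy at most $t\cdot k+\tilde n\sqrt{st}$ for any $s=\omega(\log n)$.
   Context: For a function $G$ with domain $\{0,1\}^N$ and $X$ uniform on it: $G^{-1}$ has real Shannon entropy at least $k$ if $H(X\mid G(X))\ge k$. $G^{-1}$ has real min-entropy at least $k$ if there is a negligible $\varepsilon(n)$ with $\Pr_x[\log|G^{-1}(G(x))|\ge k]\ge1-\varepsilon(n)$. A $G$-collision-finder is a randomized algorithm $A$ with $A(x;r)\in G^{-1}(G(x))$ for all $x,r$; $R$ denotes uniform coins of $A$. $G^{-1}$ has accessible average max-entropy at most $k$ if for every probabilistic polynomial-time (PPT) $G$-collision-finder $A$ there are sets $\{\mathcal{L}(x)\}$ and a negligible $\varepsilon$ with $x\in\mathcal{L}(x)$, $\mathbb{E}[\log|\mathcal{L}(X)|]\le k$, and $\Pr[A(X;R)\in\mathcal{L}(X)]\ge1-\varepsilon(n)$ for all sufficiently large $n$. $G^{-1}$ has accessible max-entropy at most $k$ if for every PPT $G$-collision-finder $A$ there are sets $\{\mathcal{L}(x)\}$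 each of size at most $2^k$, with $x\in\mathcal{L}(x)$, and a negligible $\varepsilon$ such that $\Pr[A(X;R)\in\mathcal{L}(X)]\ge1-\varepsilon(n)$ for all sufficiently large $n$. *)

(* Defs.v *)
From HB Require Import structures.
From mathcomp Require Import all_boot all_order all_algebra.
From mathcomp Require Import all_classical all_reals all_analysis.
From mathcomp Require Import Rstruct.
Set Implicit Arguments. Unset Strict Implicit. Unset Printing Implicit Defensive.
Import Order.TTheory GRing.Theory Num.Theory.
Local Open Scope ring_scope.

Notation R := Rdefinitions.R.

Definition log2 (x : R) : R := ln x / ln 2.

Definition prob (T : finType) (P : pred T) : R :=
  #|[set x | P x]|%:R / #|T|%:R.

Definition expect (T : finType) (f : T -> R) : R :=
  (\sum_(x : T) f x) / #|T|%:R.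

(* Shannon conditional entropy H(X|Y) of a joint distribution p(x,y) *)
Definition cond_entropy (T U : finType) (p : T -> U -> R) : R :=
  \sum_(x : T) \sum_(y : U)
     (if p x y == 0 then 0 else p x y * log2 ((\sum_(x' : T) p x' y) / p x y)).

Definition joint_unif (T U : finType) (G : T -> U) (x : T) (y : U) : R :=
  if G x == y then #|T|%:R^-1 else 0.

Definition preim_card (T : finType) (U : eqType) (G : T -> U) (x : T) : nat :=
  #|[set y | G y == G x]|.

Definition negligible (eps : nat -> R) : Prop :=
  forall c : nat, exists n0 : nat, forall n : nat, (n0 <= n)%N ->
    `|eps n| <= ((n%:R) ^+ c)^-1.

Definition poly_bounded (t : nat -> nat) : Prop :=
  exists c : nat, forall n : nat, (t n <= n ^ c + c)%N.

Definition omega_log (s : nat -> R) : Prop :=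
  forall c : R, 0 < c -> exists n0 : nat, forall n : nat, (n0 <= n)%N ->
    c * ln (n%:R) < s n.

Definition real_shannon_ge (D C : nat -> finType) (G : forall n, D n -> C n)
    (k : nat -> R) : Prop :=
  forall n, k n <= cond_entropy (joint_unif (G n)).

Definition real_minent_ge (D C : nat -> finType) (G : forall n, D n -> C n)
    (k : nat -> R) : Prop :=
  exists eps : nat -> R, negligible eps /\
    forall n, 1 - eps n <= prob (fun x : D n => k n <= log2 (preim_card (G n) x)%:R).

(* randomized algorithms A(x; r), with uniform coins r in a finite type *)
Record rand_alg (D : nat -> finType) := RandAlg {
  coins : nat -> finType ;
  run : forall n, D n -> coins n -> D n }.

Definition collision_finder (D C : nat -> finType) (G : forall n, D n -> C n)
    (A : rand_alg D) : Prop :=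
  forall n (x : D n) (r : coins A n), G n (@run D A n x r) = G n x.

Definition succ_prob (D : nat -> finType) (A : rand_alg D)
    (L : forall n, D n -> {set D n}) (n : nat) : R :=
  prob (fun p : D n * coins A n => @run D A n p.1 p.2 \in L n p.1).

(* an abstract class of efficient (PPT) algorithms, for every domain family *)
Definition eff_class := forall D : nat -> finType, rand_alg D -> Prop.

Definition acc_avg_maxent_le (Eff : eff_class) (D C : nat -> finType)
    (G : forall n, D n -> C n) (k : nat -> R) : Prop :=
  forall A : rand_alg D, Eff D A -> collision_finder G A ->
    exists (L : forall n, D n -> {set D n}) (eps : nat -> R),
      [/\ forall n (x : D n), x \in L n x,
          forall n, expect (fun x : D n => log2 #|L n x|%:R) <= k n,
          negligible eps &
          exists n0 : nat, forall n, (n0 <= n)%N -> 1 - eps n <= succ_prob A L n].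

Definition acc_maxent_le (Eff : eff_class) (D C : nat -> finType)
    (G : forall n, D n -> C n) (k : nat -> R) : Prop :=
  forall A : rand_alg D, Eff D A -> collision_finder G A ->
    exists (L : forall n, D n -> {set D n}) (eps : nat -> R),
      [/\ forall n (x : D n), x \in L n x,
          forall n (x : D n), #|L n x|%:R <= 2 `^ (k n),
          negligible eps &
          exists n0 : nat, forall n, (n0 <= n)%N -> 1 - eps n <= succ_prob A L n].

Definition bits (l : nat) : finType := l.-tuple bool.

Definition tfold (t : nat) (T : finType) : finType := t.-tuple T.

Definition direct_product (nt m t : nat -> nat)
    (F : forall n, bits (nt n) -> bits (m n)) :
    forall n, tfold (t n) (bits (nt n)) -> tfold (t n) (bits (m n)) :=
  fun n xs => map_tuple (F n) xs.

(* the reduction: embed the input x at a uniformly random position i of a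
   t-tuple of otherwise uniform inputs, run A, output the i-th coordinate *)
Definition embed_alg (nt t : nat -> nat)
    (A : rand_alg (fun n => tfold (t n) (bits (nt n)))) : rand_alg (fun n => bits (nt n)) :=
  @RandAlg (fun n => bits (nt n))
    (fun n => ('I_(t n) * (tfold (t n) (bits (nt n)) * coins A n))%type : finType)
    (fun n x c =>
       tnth (@run _ A n [tuple (if j == c.1 then x else tnth c.2.1 j) | j < t n] c.2.2) c.1).

Definition closed_under_embed (Eff : eff_class) (nt t : nat -> nat) : Prop :=
  forall A : rand_alg (fun n => tfold (t n) (bits (nt n))),
    Eff _ A -> Eff _ (embed_alg A).

(* Main.v *)
Require Import Defs.
From HB Require Import structures.
From mathcomp Require Import all_boot all_order all_algebra.
From mathcomp Require Import all_classical all_reals all_analysis.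
From mathcomp Require Import Rstruct.
From mathcomp Require Import ring lra zify.
Import Order.TTheory GRing.Theory Num.Theory.
Local Open Scope ring_scope.
Set Implicit Arguments. Unset Strict Implicit. Unset Printing Implicit Defensive.
Local Notation negligible := Defs.negligible.

Section Gen.
Variable T : finType.

Lemma cardsR (P : pred T) : #|[set x | P x]|%:R = \sum_x (P x)%:R :> R.
Proof.
rewrite -sum1dep_card natr_sum big_mkcond /=; apply: eq_bigr => x _.
by case: (P x).
Qed.

Lemma probE (P : pred T) : prob P = (\sum_x (P x)%:R) / #|T|%:R.
Proof. by rewrite /prob cardsR. Qed.

Lemma prob_le (P Q : pred T) : (forall x, P x -> Q x) -> prob P <= prob Q.
Proof.
move=> H; rewrite !probE ler_wpM2r // ?invr_ge0 // ler_sum // => x _.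
by case: (boolP (P x)) => [/H -> //|_]; case: (Q x).
Qed.

Lemma prob_ge0 (P : pred T) : 0 <= prob P.
Proof. by rewrite probE mulr_ge0 // ?invr_ge0 // sumr_ge0 // => x _; case: (P x). Qed.

Lemma prob_or (P Q : pred T) : prob (fun x => P x || Q x) <= prob P + prob Q.
Proof.
rewrite !probE -mulrDl ler_wpM2r // ?invr_ge0 // -big_split ler_sum // => x _.
by case: (P x); case: (Q x) => /=; lra.
Qed.

Lemma prob_compl (P : pred T) : (0 < #|T|)%N -> prob (fun x => ~~ P x) = 1 - prob P.
Proof.
move=> hT; rewrite !probE.
have -> : \sum_x ((~~ P x)%:R : R) = \sum_x (1 - (P x)%:R) by apply: eq_bigr => x _; case: (P x) => /=; lra.
rewrite sumrB sumr_const mulrBl -[#|T|%:R]mulr1n divff // pnatr_eq0 -lt0n //.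
Qed.

Lemma prob_exists (I : finType) (Q : I -> pred T) :
  prob (fun x => [exists i, Q i x]) <= \sum_i prob (Q i).
Proof.
under eq_bigr do rewrite probE.
rewrite -mulr_suml probE ler_wpM2r // ?invr_ge0 // exchange_big /= ler_sum // => x _.
case: (boolP [exists i, Q i x]) => [/existsP [i Hi]|_]; last by rewrite sumr_ge0 // => i _; case: (Q i x).
rewrite (bigD1 i) //= Hi lerDl sumr_ge0 // => j _; by case: (Q j x).
Qed.

End Gen.

Lemma sum_tuple_prod (T : finType) (t : nat) (g : 'I_t -> T -> R) :
  \sum_(xs : t.-tuple T) \prod_(i < t) g i (tnth xs i) = \prod_(i < t) \sum_x g i x.
Proof.
rewrite bigA_distr_bigA /=.
rewrite (reindex (fun f : {ffun 'I_t -> T} => [tuple f i | i < t])) /=.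
  by apply: eq_bigr => f _; apply: eq_bigr => i _; rewrite tnth_mktuple.
exists (fun xs : t.-tuple T => [ffun i => tnth xs i]) => f _.
  by apply/ffunP => i; rewrite ffunE tnth_mktuple.
by apply: eq_from_tnth => i; rewrite tnth_mktuple ffunE.
Qed.

Lemma forall_prod (t : nat) (P : 'I_t -> bool) :
  ([forall i, P i])%:R = \prod_i (P i)%:R :> R.
Proof.
case: (boolP [forall i, P i]) => [/forallP H|].
  by rewrite big1 // => i _; rewrite H.
rewrite negb_forall => /existsP [i Hi].
by rewrite (bigD1 i) //= (negbTE Hi) mul0r.
Qed.

Lemma card_tuple_prod (T : finType) (t : nat) (A : 'I_t -> {set T}) :
  #|[set xs : t.-tuple T | [forall i, tnth xs i \in A i]]|%:R = \prod_i #|A i|%:R :> R.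
Proof.
rewrite cardsR.
rewrite (eq_bigr (fun xs : t.-tuple T => \prod_i ((tnth xs i \in A i) : nat)%:R)); last first.
  by move=> xs _; rewrite -forall_prod.
rewrite (@sum_tuple_prod T t (fun i x => ((x \in A i) : nat)%:R)); apply: eq_bigr => i _.
rewrite -cardsR; congr (_ %:R); apply: eq_card => x; by rewrite inE.
Qed.

Lemma exp_quad (y : R) : y <= 1/2 -> expR y <= 1 + y + 2 * y ^+ 2.
Proof.
move=> hy.
have h1 : 1 - y <= expR (- y) by have := expR_ge1Dx (- y).
have hp : 0 < 1 - y by lra.
have -> : expR y = (expR (- y))^-1 by rewrite expRN invrK.
apply: (@le_trans _ _ ((1 - y)^-1)).
  by rewrite lef_pV2 // posrE ?expR_gt0.
rewrite -(@ler_pM2r _ (1 - y)) // mulVf ?gt_eqF //.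
have : 0 <= y ^+ 2 * (1 - 2 * y) by apply: mulr_ge0; [exact: sqr_ge0 | lra].
nra.
Qed.

Lemma chernoff (T : finType) (t : nat) (g : T -> R) (B a : R) :
  (0 < #|T|)%N -> \sum_x g x = 0 -> (forall x, `|g x| <= B) -> 0 < B ->
  0 <= a -> a <= t%:R -> (0 < t)%N ->
  prob (fun xs : t.-tuple T => B * a < \sum_(i < t) g (tnth xs i))
    <= expR (- (a ^+ 2 / (8 * t%:R))).
Proof.
move=> hT hg0 hgB hB ha hat ht.
set N : R := #|T|%:R. set tr : R := t%:R.
have hN : 0 < N by rewrite /N ltr0n.
have htr : 0 < tr by rewrite /tr ltr0n.
set lam := a / (4 * tr * B).
have hlam : 0 <= lam by apply: divr_ge0 => //; apply: ltW; rewrite !mulr_gt0.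
have hlB : lam * B = a / (4 * tr) by rewrite /lam; field; apply/andP; split; rewrite gt_eqF.
have hlB1 : lam * B <= 1/4.
  by rewrite hlB ler_pdivrMr ?mulr_gt0 //; lra.
have hx : forall x, expR (lam * g x) <= 1 + lam * g x + 2 * (lam * B) ^+ 2.
  move=> x.
  have ha' : `|lam * g x| <= lam * B by rewrite normrM ger0_norm //; apply: ler_wpM2l.
  move: ha'; rewrite ler_norml => /andP [h1 h2].
  apply: (le_trans (exp_quad _)); first lra.
  rewrite lerD2l; nra.
have hsum : \sum_x expR (lam * g x) <= N * expR (2 * (lam * B) ^+ 2).
  apply: le_trans (ler_sum _ (fun x _ => hx x)) _.
  rewrite big_split big_split /= -mulr_sumr hg0 mulr0 addr0 !sumr_const.
  rewrite -mulrnDl -[X in X <= _]mulr_natl; apply: ler_wpM2l; [exact: ltW|exact: expR_ge1Dx].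
have hmgf : \sum_(xs : t.-tuple T) expR (lam * \sum_(i < t) g (tnth xs i))
    = (\sum_x expR (lam * g x)) ^+ t.
  under eq_bigr do rewrite mulr_sumr expR_sum.
  by rewrite (@sum_tuple_prod T t (fun _ x => expR (lam * g x))) prodr_const card_ord.
have hmark : #|[set xs : t.-tuple T | B * a < \sum_(i < t) g (tnth xs i)]|%:R
     * expR (lam * (B * a))
    <= \sum_(xs : t.-tuple T) expR (lam * \sum_(i < t) g (tnth xs i)).
  rewrite cardsR mulr_suml ler_sum // => xs _.
  case: (boolP (B * a < \sum_(i < t) g (tnth xs i))) => h /=.
    by rewrite mul1r ler_expR; apply: ler_wpM2l => //; exact: ltW.
  by rewrite mul0r expR_ge0.
have key : #|[set xs : t.-tuple T | B * a < \sum_(i < t) g (tnth xs i)]|%:R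
     * expR (lam * (B * a)) <= N ^+ t * expR (tr * (2 * (lam * B) ^+ 2)).
  apply: le_trans hmark _; rewrite hmgf expRM_natl -exprMn.
  apply: lerXn2r => //; first by rewrite nnegrE sumr_ge0 // => x _; rewrite expR_ge0.
  by rewrite nnegrE mulr_ge0 ?expR_ge0 // ltW.
have E : tr * (2 * (lam * B) ^+ 2) - lam * (B * a) = - (a ^+ 2 / (8 * tr)).
  by rewrite (mulrA lam B a) hlB; field; rewrite gt_eqF.
have hc : #|tuple_tuple_of__canonical__fintype_Finite t T|%:R = N ^+ t.
  by rewrite -natrX -card_tuple.
rewrite /prob hc -/N ler_pdivrMr ?exprn_gt0 // -E exp.expRD expRN.
rewrite -(@ler_pM2r _ (expR (lam * (B * a)))) ?expR_gt0 //.
have -> : expR (tr * (2 * (lam * B) ^+ 2)) * (expR (lam * (B * a)))^-1 * N ^+ t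
     * expR (lam * (B * a)) = N ^+ t * expR (tr * (2 * (lam * B) ^+ 2)).
  by field; rewrite gt_eqF // expR_gt0.
exact: key.
Qed.

Lemma prob_false (T : finType) (P : pred T) : (forall x, ~~ P x) -> prob P = 0.
Proof.
move=> H; rewrite probE big1 ?mul0r // => x _; by rewrite (negbTE (H x)).
Qed.

Lemma hoeff_core (T : finType) (t : nat) (g : T -> R) (B a : R) :
  (0 < #|T|)%N -> \sum_x g x = 0 -> (forall x, `|g x| <= B) -> 0 <= a ->
  prob (fun xs : t.-tuple T => B * a < \sum_(i < t) g (tnth xs i))
    <= expR (- (a ^+ 2 / (8 * t%:R))).
Proof.
move=> hT hg0 hgB ha.
have [x0 _] : exists x : T, x \in T by apply/card_gt0P.
have hB : 0 <= B by apply: le_trans (hgB x0); exact: normr_ge0.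
have hS : forall xs : t.-tuple T, \sum_(i < t) g (tnth xs i) <= t%:R * B.
  move=> xs; apply: le_trans (_ : \sum_(i < t) B <= _).
    by apply: ler_sum => i _; apply: le_trans (hgB _); exact: ler_norm.
  by rewrite sumr_const card_ord mulr_natl.
case: (posnP t) => [t0|tp].
  rewrite prob_false ?expR_ge0 // => xs; rewrite -leNgt.
  by apply: le_trans (hS xs) _; rewrite t0 mul0r mulr_ge0.
case: (ltrP 0 B) => [Bp|B0]; last first.
  rewrite prob_false ?expR_ge0 // => xs; rewrite -leNgt.
  apply: le_trans (hS xs) _; have -> : B = 0 by apply/eqP; rewrite eq_le B0 hB.
  by rewrite !mulr0 mul0r.
case: (lerP a t%:R) => [hat|hat]; last first.
  rewrite prob_false ?expR_ge0 // => xs; rewrite -leNgt.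
  apply: le_trans (hS xs) _; rewrite mulrC; apply: ler_wpM2l => //; exact: ltW.
exact: chernoff.
Qed.

Lemma expect_bounds (T : finType) (f : T -> R) (B : R) :
  (0 < #|T|)%N -> (forall x, 0 <= f x <= B) -> 0 <= expect f <= B.
Proof.
move=> hT hf; have hN : 0 < #|T|%:R :> R by rewrite ltr0n.
rewrite /expect; apply/andP; split.
  apply: divr_ge0; last exact: ltW.
  by apply: sumr_ge0 => x _; case/andP: (hf x).
rewrite ler_pdivrMr //; apply: le_trans (_ : \sum_(x : T) B <= _).
  by apply: ler_sum => x _; case/andP: (hf x).
by rewrite sumr_const mulr_natr.
Qed.

Lemma sum_centered (T : finType) (f : T -> R) :
  (0 < #|T|)%N -> \sum_x (f x - expect f) = 0.
Proof.
move=> hT; rewrite sumrB sumr_const /expect -[X in _ - X]mulr_natr divfK ?subrr //.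
by rewrite pnatr_eq0 -lt0n.
Qed.

Lemma hoeff_up (T : finType) (t : nat) (f : T -> R) (B a : R) :
  (0 < #|T|)%N -> (forall x, 0 <= f x <= B) -> 0 <= a ->
  prob (fun xs : t.-tuple T => t%:R * expect f + B * a < \sum_(i < t) f (tnth xs i))
    <= expR (- (a ^+ 2 / (8 * t%:R))).
Proof.
move=> hT hf ha.
have /andP [m0 mB] := expect_bounds hT hf.
have hg : forall x, `|f x - expect f| <= B.
  move=> x; case/andP: (hf x) => h1 h2; rewrite ler_norml; apply/andP; split; lra.
apply: (le_trans _ (@hoeff_core T t (fun x => f x - expect f) B a hT (sum_centered f hT) hg ha)).
  apply: prob_le => xs.
rewrite sumrB sumr_const card_ord -mulr_natl => h; lra.
Qed.

Lemma hoeff_low (T : finType) (t : nat) (f : T -> R) (B a : R) :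
  (0 < #|T|)%N -> (forall x, 0 <= f x <= B) -> 0 <= a ->
  prob (fun xs : t.-tuple T => \sum_(i < t) f (tnth xs i) < t%:R * expect f - B * a)
    <= expR (- (a ^+ 2 / (8 * t%:R))).
Proof.
move=> hT hf ha.
have /andP [m0 mB] := expect_bounds hT hf.
have hs : \sum_x (expect f - f x) = 0.
  rewrite (eq_bigr (fun x => -(f x - expect f))) ?sumrN ?sum_centered ?oppr0 // => x _.
  by rewrite opprB.
have hg : forall x, `|expect f - f x| <= B.
  move=> x; case/andP: (hf x) => h1 h2; rewrite ler_norml; apply/andP; split; lra.
apply: (le_trans _ (@hoeff_core T t (fun x => expect f - f x) B a hT hs hg ha)).
  apply: prob_le => xs.
rewrite sumrB sumr_const card_ord -mulr_natl => h; lra.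
Qed.

Lemma ln_prod (t : nat) (h : 'I_t -> R) :
  (forall i, 0 < h i) -> ln (\prod_i h i) = \sum_i ln (h i).
Proof.
move=> hp.
suff [] : 0 < \prod_i h i /\ ln (\prod_i h i) = \sum_i ln (h i) by [].
apply: (big_rec2 (fun s p => 0 < p /\ ln p = s)); first by rewrite ln1.
move=> i y1 y2 _ [h1 h2]; split; first by rewrite mulr_gt0.
by rewrite lnM ?posrE // h2.
Qed.

Lemma log2_prod (t : nat) (h : 'I_t -> R) :
  (forall i, 0 < h i) -> log2 (\prod_i h i) = \sum_i log2 (h i).
Proof. by move=> hp; rewrite /log2 ln_prod // mulr_suml. Qed.

Lemma ln2_gt0 : 0 < ln (2 : R).
Proof. by apply: ln_gt0; lra. Qed.

Lemma log2_bounds (c l : nat) : (0 < c)%N -> (c <= 2 ^ l)%N ->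
  0 <= log2 c%:R <= l%:R.
Proof.
move=> c0 cl; rewrite /log2; apply/andP; split.
  apply: divr_ge0; last exact: (ltW ln2_gt0).
  by apply: ln_ge0; rewrite ler1n.
rewrite ler_pdivrMr ?ln2_gt0 //.
have -> : l%:R * ln (2 : R) = ln ((2 : R) ^+ l) by rewrite lnXn // mulr_natl.
rewrite ler_ln ?posrE ?ltr0n ?exprn_gt0 //.
by rewrite -natrX ler_nat.
Qed.

Lemma card_bits l : #|bits l| = (2 ^ l)%N.
Proof. by rewrite card_tuple card_bool. Qed.

Lemma entropy_expect (T U : finType) (G : T -> U) : (0 < #|T|)%N ->
  cond_entropy (joint_unif G) = expect (fun x => log2 (preim_card G x)%:R).
Proof.
move=> hT.
have hN : (#|T|%:R : R) != 0 by rewrite pnatr_eq0 -lt0n.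
have hNi : (#|T|%:R : R)^-1 != 0 by rewrite invr_eq0.
rewrite /cond_entropy /expect mulr_suml; apply: eq_bigr => x _.
rewrite (bigD1 (G x)) //= [X in _ + X]big1 ?addr0; last first.
  move=> y hy; have hy2 : (G x == y) = false by rewrite eq_sym (negbTE hy).
  by rewrite /joint_unif hy2 eqxx.
rewrite /joint_unif eqxx (negbTE hNi).
rewrite -big_mkcond /= sumr_const /preim_card cardsE.
by rewrite -[X in log2 (X / _)]mulr_natl mulfK // mulrC.
Qed.

Lemma preim_tuple (T U : finType) (t : nat) (F : T -> U) (xs : t.-tuple T) :
  (preim_card (fun ys : t.-tuple T => map_tuple F ys) xs)%:R
    = \prod_i (preim_card F (tnth xs i))%:R :> R.
Proof.
rewrite /preim_card -card_tuple_prod; congr (_ %:R); apply: eq_card => ys.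
rewrite !inE; apply/eqP/forallP.
  move=> h i; rewrite inE; apply/eqP.
  by have := congr1 (fun zs => tnth zs i) h; rewrite /= !tnth_map.
move=> h; apply: eq_from_tnth => i; rewrite !tnth_map.
by have := h i; rewrite inE => /eqP.
Qed.

Lemma negl_le (e f : nat -> R) : negligible e ->
  (exists n0, forall n, (n0 <= n)%N -> `|f n| <= e n) -> negligible f.
Proof.
move=> he [n1 h] c; have [n0 h0] := he c; exists (maxn n0 n1) => n hn.
apply: le_trans (h n _) _; first by apply: leq_trans hn; exact: leq_maxr.
by apply: le_trans (ler_norm _) (h0 n _); apply: leq_trans hn; exact: leq_maxl.
Qed.

Lemma negl_add (e1 e2 : nat -> R) : negligible e1 -> negligible e2 ->
  negligible (fun n => e1 n + e2 n).
Proof.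
move=> h1 h2 c; have [n1 H1] := h1 c.+1; have [n2 H2] := h2 c.+1.
exists (maxn (maxn n1 n2) 2) => n hn.
have hn1 : (n1 <= n)%N by apply: leq_trans hn; rewrite !leq_max leqnn.
have hn2 : (n2 <= n)%N by apply: leq_trans hn; rewrite !leq_max leqnn orbT.
have hn3 : (2 <= n)%N by apply: leq_trans hn; rewrite !leq_max leqnn orbT.
have hnr : 2 <= n%:R :> R by rewrite ler_nat.
have hx : 0 < n%:R ^+ c :> R by rewrite exprn_gt0 // ltr0n; apply: leq_trans hn3.
apply: le_trans (ler_normD _ _) _.
apply: le_trans (lerD (H1 n hn1) (H2 n hn2)) _.
rewrite exprS invfM -mulrDl.
apply: ler_piMl; first by rewrite invr_ge0 ltW.
have hn0 : 0 < n%:R :> R by lra.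
by rewrite -mulr2n -(mulr_natr (n%:R^-1) 2) mulrC ler_pdivrMr // mul1r.
Qed.

Lemma negl_poly (t : nat -> nat) (e : nat -> R) : poly_bounded t -> negligible e ->
  negligible (fun n => (t n)%:R * e n).
Proof.
move=> [d hd] he c; have [n0 H0] := he (c + d.+1)%N.
exists (maxn n0 d.+1) => n hn.
have hn0 : (n0 <= n)%N by apply: leq_trans hn; exact: leq_maxl.
have hnd : (d.+1 <= n)%N by apply: leq_trans hn; exact: leq_maxr.
have htn : (t n <= n ^ d.+1)%N.
  apply: leq_trans (hd n) _.
  have h1 : (1 <= n ^ d)%N by rewrite expn_gt0; apply/orP; left; apply: leq_trans hnd.
  rewrite expnS; nia.
have hnp : 0 < n%:R :> R by rewrite ltr0n; apply: leq_trans hnd.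
rewrite normrM ger0_norm ?ler0n //.
apply: le_trans (_ : (n%:R ^+ d.+1) * (n%:R ^+ (c + d.+1))^-1 <= _).
  apply: ler_pM; [exact: ler0n | exact: normr_ge0 | by rewrite -natrX ler_nat | exact: H0].
rewrite exprD invfM mulrCA mulfV ?mulr1 //.
by rewrite gt_eqF // exprn_gt0.
Qed.

Lemma negl_exp (s : nat -> R) : omega_log s -> negligible (fun n => expR (- (s n / 8))).
Proof.
move=> hs c.
have [n0 h] := hs (8 * (c.+1)%:R) (ltac:(by rewrite mulr_gt0 // ltr0n)).
exists (maxn n0 1) => n hn.
have hn0 : (n0 <= n)%N by apply: leq_trans hn; exact: leq_maxl.
have hn1 : (1 <= n)%N by apply: leq_trans hn; exact: leq_maxr.
have hnp : 0 < n%:R :> R by rewrite ltr0n.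
have -> : (n%:R ^+ c)^-1 = expR (- (c%:R * ln (n%:R : R))).
  by rewrite expRN expRM_natl lnK // posrE.
rewrite ger0_norm ?expR_ge0 // ler_expR lerN2.
have hl : 0 <= ln (n%:R : R) by apply: ln_ge0; rewrite ler1n.
have hc : 0 <= c%:R :> R by exact: ler0n.
have e : (c.+1)%:R = c%:R + 1 :> R by rewrite -addn1 natrD.
have := h n hn0; rewrite e => H.
rewrite ler_pdivlMr; last lra.
nra.
Qed.

Lemma preim_pos (T U : finType) (F : T -> U) x : (0 < preim_card F x)%N.
Proof. by apply/card_gt0P; exists x; rewrite inE. Qed.

Lemma preim_le (T U : finType) (F : T -> U) x : (preim_card F x <= #|T|)%N.
Proof. exact: max_card. Qed.

Lemma bits_gt0 l : (0 < #|bits l|)%N.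
Proof. by rewrite card_bits expn_gt0. Qed.

Lemma tuple_gt0 (T : finType) l : (0 < #|T|)%N -> (0 < #|tfold l T|)%N.
Proof. by move=> h; rewrite card_tuple expn_gt0 h. Qed.

Lemma sqrt_sq_div (s tr : R) : 0 <= s -> 0 < tr ->
  Num.sqrt (s * tr) ^+ 2 / (8 * tr) = s / 8.
Proof.
move=> hs ht; rewrite sqr_sqrtr; last by rewrite mulr_ge0 // ltW.
by field; rewrite gt_eqF.
Qed.

Lemma part1 (nt m : nat -> nat) (F : forall n : nat, bits (nt n) -> bits (m n))
  (t : nat -> nat) :
  (forall k : nat -> R,
     real_shannon_ge F k ->
     forall s : nat -> R, omega_log s -> (forall n, s n < (t n)%:R) ->
       real_minent_ge (@direct_product nt m t F)
         (fun n => (t n)%:R * k n - (nt n)%:R * Num.sqrt (s n * (t n)%:R))).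
Proof.
move=> k hk s hs hst.
set K := (fun n => (t n)%:R * k n - (nt n)%:R * Num.sqrt (s n * (t n)%:R)).
pose good n := fun xs : tfold (t n) (bits (nt n)) =>
  K n <= log2 (preim_card (@direct_product nt m t F n) xs)%:R.
exists (fun n => 1 - prob (good n)); split; last by move=> n; rewrite /good; lra.
apply: (negl_le (negl_exp hs)).
have [n0 h0] := hs 1 ltr01.
exists (maxn n0 2) => n hn.
have hn0 : (n0 <= n)%N by apply: leq_trans hn; exact: leq_maxl.
have hn2 : (2 <= n)%N by apply: leq_trans hn; exact: leq_maxr.
have hsp : 0 < s n.
  apply: le_lt_trans (h0 n hn0); rewrite mul1r; apply: ltW; apply: ln_gt0.
  by rewrite ltr1n.
have htp : 0 < (t n)%:R :> R by apply: lt_trans hsp (hst n).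
have hT0 := bits_gt0 (nt n).
rewrite -(prob_compl (good n)); last exact: tuple_gt0.
rewrite ger0_norm; last exact: prob_ge0.
set f := fun x : bits (nt n) => log2 (preim_card (F n) x)%:R.
set a := Num.sqrt (s n * (t n)%:R).
have hf : forall x, 0 <= f x <= (nt n)%:R.
  move=> x; apply: log2_bounds; first exact: preim_pos.
  by rewrite -card_bits; exact: preim_le.
apply: (@le_trans _ _ (prob (fun xs : (t n).-tuple (bits (nt n)) =>
   \sum_(i < t n) f (tnth xs i) < (t n)%:R * expect f - (nt n)%:R * a))).
  apply: prob_le => xs; rewrite /good -ltNge.
  have e : (preim_card (@direct_product nt m t F n) xs)%:R
     = \prod_i (preim_card (F n) (tnth xs i))%:R :> R := preim_tuple (F n) xs.
  rewrite e log2_prod; last by move=> i; rewrite ltr0n; exact: preim_pos.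
  move=> h; apply: (lt_le_trans h); rewrite /K lerD2r; apply: ler_wpM2l; first exact: ltW.
  by rewrite -entropy_expect //; exact: hk.
apply: le_trans (@hoeff_low _ (t n) _ _ _ hT0 hf (sqrtr_ge0 _)) _.
by rewrite sqrt_sq_div // ltW.
Qed.

Definition upd (T : Type) (t : nat) (ys : t.-tuple T) (i : 'I_t) (x : T) : t.-tuple T :=
  [tuple (if j == i then x else tnth ys j) | j < t].

Lemma tnth_upd (T : Type) t (ys : t.-tuple T) i x j :
  tnth (upd ys i x) j = if j == i then x else tnth ys j.
Proof. by rewrite tnth_mktuple. Qed.

Lemma upd_upd (T : Type) t (ys : t.-tuple T) i x y : upd (upd ys i x) i y = upd ys i y.
Proof. by apply: eq_from_tnth => j; rewrite !tnth_upd; case: (j == i). Qed.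

Lemma upd_tnth (T : Type) t (ys : t.-tuple T) i : upd ys i (tnth ys i) = ys.
Proof. by apply: eq_from_tnth => j; rewrite !tnth_upd; case: eqP => [->|]. Qed.

Lemma upd_sum (T : finType) t (i : 'I_t) (H : t.-tuple T -> R) :
  \sum_(x : T) \sum_(ys : t.-tuple T) H (upd ys i x) = #|T|%:R * \sum_(zs : t.-tuple T) H zs.
Proof.
rewrite pair_bigA /=.
rewrite (reindex (fun p : t.-tuple T * T => (tnth p.1 i, upd p.1 i p.2))) /=; last first.
  exists (fun q : T * t.-tuple T => (upd q.2 i q.1, tnth q.2 i)) => -[a b] _ /=.
    by rewrite tnth_upd eqxx upd_upd upd_tnth.
  by rewrite tnth_upd eqxx upd_upd upd_tnth.
rewrite (eq_bigr (fun p : t.-tuple T * T => H p.1)); last first.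
  by move=> -[a b] _ /=; rewrite upd_upd upd_tnth.
rewrite -(pair_bigA _ (fun a (b : T) => H a)) /= mulr_sumr.
by apply: eq_bigr => zs _; rewrite sumr_const mulr_natl.
Qed.

Lemma sum_decomp (T C : finType) t (G : T * ('I_t * (t.-tuple T * C)) -> R) :
  \sum_q G q = \sum_(i < t) \sum_(x : T) \sum_(ys : t.-tuple T) \sum_(r : C) G (x, (i, (ys, r))).
Proof.
rewrite [RHS]exchange_big /=.
under [RHS]eq_bigr do under eq_bigr do rewrite pair_bigA.
under [RHS]eq_bigr do rewrite pair_bigA.
rewrite [RHS]pair_bigA.
by apply: eq_bigr => -[x [i [ys r]]] _.
Qed.

Lemma embed_count (T C : finType) (t : nat) (run : t.-tuple T -> C -> t.-tuple T)
  (Lp : T -> {set T}) :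
  (0 < t)%N -> (0 < #|T|)%N -> (0 < #|C|)%N ->
  t%:R * prob (fun q : T * ('I_t * (t.-tuple T * C)) =>
     tnth (run (upd q.2.2.1 q.2.1 q.1) q.2.2.2) q.2.1 \notin Lp q.1)
  = \sum_(i < t) prob (fun p : t.-tuple T * C => tnth (run p.1 p.2) i \notin Lp (tnth p.1 i)).
Proof.
move=> ht hT hC.
have e : forall i : 'I_t,
   \sum_(x : T) \sum_(ys : t.-tuple T) \sum_(r : C)
      ((tnth (run (upd ys i x) r) i \notin Lp x) : nat)%:R
   = #|T|%:R * \sum_(p : t.-tuple T * C)
      ((tnth (run p.1 p.2) i \notin Lp (tnth p.1 i)) : nat)%:R :> R.
  move=> i.
  pose H := fun zs : t.-tuple T => \sum_(r : C) ((tnth (run zs r) i \notin Lp (tnth zs i)) : nat)%:R : R.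
  transitivity (\sum_(x : T) \sum_(ys : t.-tuple T) H (upd ys i x)).
    by apply: eq_bigr => x _; apply: eq_bigr => ys _; rewrite /H tnth_upd eqxx.
  rewrite upd_sum /H pair_bigA /=.
  by congr (_ * _); apply: eq_bigr => -[zs r].
rewrite !probE sum_decomp /=.
rewrite (eq_bigr _ (fun i _ => e i)) -mulr_sumr.
rewrite -mulr_suml !card_prod card_ord.
have h1 : (#|T|%:R : R) != 0 by rewrite pnatr_eq0 -lt0n.
have h2 : (t%:R : R) != 0 by rewrite pnatr_eq0 -lt0n.
have h3 : (#|C|%:R : R) != 0 by rewrite pnatr_eq0 -lt0n.
have h4 : (#|tfold t T|%:R : R) != 0 by rewrite pnatr_eq0 -lt0n tuple_gt0.
rewrite [in RHS](eq_bigr _ (fun i _ => cardsR _)) !natrM.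
set S := \sum_(i < t) _.
by field; rewrite h1 h2 h3 h4.
Qed.

Lemma prob_fst (T U : finType) (Q : pred T) : (0 < #|U|)%N ->
  prob (fun p : T * U => Q p.1) = prob Q.
Proof.
move=> hU; rewrite !probE card_prod natrM.
rewrite -(pair_bigA _ (fun x (u : U) => (Q x)%:R)) /=.
under eq_bigr do rewrite sumr_const.
rewrite (eq_bigr (fun x => (Q x)%:R * #|U|%:R)); last by move=> x _; rewrite mulr_natr.
rewrite -mulr_suml.
have hU' : (#|U|%:R : R) != 0 by rewrite pnatr_eq0 -lt0n.
case: (eqVneq (#|T|%:R : R) 0) => hT.
  by rewrite hT mul0r invr0 !mulr0.
by field; rewrite hU' hT.
Qed.

Lemma prob_pos_card (T : finType) (P : pred T) : 0 < prob P -> (0 < #|T|)%N.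
Proof.
rewrite lt0n; apply: contraTneq => h0.
by rewrite /prob h0 invr0 mulr0 ltxx.
Qed.

Lemma powR_lt_log2 (K x : R) : 0 < x -> 2 `^ K < x -> K < log2 x.
Proof.
move=> hx h; rewrite /log2 ltr_pdivlMr ?ln2_gt0 //.
have hp : 0 < (2 : R) `^ K by rewrite powR_gt0.
by rewrite -ln_powR ltr_ln ?posrE.
Qed.

Lemma part2 (nt m : nat -> nat) (F : forall n : nat, bits (nt n) -> bits (m n))
  (t : nat -> nat) (ht : poly_bounded t) :
  (forall Eff : eff_class, closed_under_embed Eff nt t ->
   forall k : nat -> R,
     acc_avg_maxent_le Eff F k ->
     forall s : nat -> R, omega_log s ->
       acc_maxent_le Eff (@direct_product nt m t F)
         (fun n => (t n)%:R * k n + (nt n)%:R * Num.sqrt (s n * (t n)%:R))).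
Proof.
move=> Eff hEff k hk s hs A hA hcf.
have hA' := hEff A hA.
have hcf' : collision_finder F (embed_alg A).
  move=> n x [i [ys r]].
  have := hcf n (upd ys i x) r; rewrite /direct_product => /(congr1 (fun zs => tnth zs i)).
  by rewrite !tnth_map tnth_ord_tuple eqxx.
have [L' [eps' [hL'in hL'exp hneg' [n0' hsucc']]]] := hk _ hA' hcf'.
have hfL : forall n x, 0 <= log2 #|L' n x|%:R <= (nt n)%:R.
  move=> n x; apply: log2_bounds.
    by apply/card_gt0P; exists x; exact: hL'in.
  by rewrite -card_bits; exact: max_card.
have hk0 : forall n, 0 <= k n.
  move=> n; apply: le_trans (hL'exp n).
  by have /andP [] := expect_bounds (bits_gt0 (nt n)) (hfL n).
set K := (fun n => (t n)%:R * k n + (nt n)%:R * Num.sqrt (s n * (t n)%:R)).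
have hK0 : forall n, 0 <= K n.
  move=> n; rewrite /K addr_ge0 ?mulr_ge0 ?sqrtr_ge0 //.
pose P n := fun xs : tfold (t n) (bits (nt n)) =>
  \prod_(i < t n) (#|L' n (tnth xs i)|%:R : R) <= 2 `^ K n.
pose L := fun n (xs : tfold (t n) (bits (nt n))) =>
  if P n xs then [set ys : tfold (t n) (bits (nt n)) | [forall i, tnth ys i \in L' n (tnth xs i)]]
  else [set xs].
exists L, (fun n => 1 - succ_prob A L n); split.
- move=> n xs; rewrite /L; case: ifP => _; rewrite inE //.
  by apply/forallP => i; exact: hL'in.
- move=> n xs; rewrite /L; case: ifP => h.
    have e := @card_tuple_prod (bits (nt n)) (t n) (fun i => L' n (tnth xs i)).
    by rewrite e.
  rewrite cards1; apply: (@le_trans _ _ (2 `^ 0)); first by rewrite powRr0.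
  apply: ler_powR; [lra | exact: hK0].
- apply: (negl_le (negl_add (negl_exp hs) (negl_poly ht hneg'))).
  have [n1 h1] := hs 1 ltr01.
  have [n2 h2] := hneg' 1%N.
  exists (maxn (maxn n0' n1) (maxn n2 2)) => n hn.
  have hn0 : (n0' <= n)%N by apply: leq_trans hn; rewrite !leq_max leqnn.
  have hn1 : (n1 <= n)%N by apply: leq_trans hn; rewrite !leq_max leqnn orbT.
  have hn2 : (n2 <= n)%N by apply: leq_trans hn; rewrite !leq_max leqnn !orbT.
  have hn3 : (2 <= n)%N by apply: leq_trans hn; rewrite !leq_max leqnn !orbT.
  have hsp : 0 < s n.
    apply: le_lt_trans (h1 n hn1); rewrite mul1r; apply: ltW; apply: ln_gt0.
    by rewrite ltr1n.
  have heps : eps' n < 1.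
    have := h2 n hn2; rewrite expr1 => he.
    have : (n%:R : R)^-1 <= 2^-1.
      by rewrite lef_pV2 ?posrE ?ltr0n // ?ler_nat //; apply: leq_trans hn3.
    move: (ler_norm (eps' n)) => hh; lra.
  have hsucc := hsucc' n hn0.
  have hpos : 0 < succ_prob (embed_alg A) L' n by lra.
  have hcard := prob_pos_card hpos.
  have hcard0 := hcard.
  rewrite /= !card_prod card_ord !muln_gt0 in hcard.
  case/and4P: hcard => _ htp _ hC.
  have hT0 := bits_gt0 (nt n).
  have hTC : (0 < #|{: tfold (t n) (bits (nt n)) * coins A n}|)%N.
    by rewrite card_prod muln_gt0 tuple_gt0.
  rewrite /succ_prob.
  rewrite -(prob_compl (fun p : tfold (t n) (bits (nt n)) * coins A n =>
             @run _ A n p.1 p.2 \in L n p.1)) //.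
  rewrite ger0_norm; last exact: prob_ge0.
  apply: (@le_trans _ _ (prob (fun p : tfold (t n) (bits (nt n)) * coins A n =>
     ~~ P n p.1 || [exists i, tnth (@run _ A n p.1 p.2) i \notin L' n (tnth p.1 i)]))).
    apply: prob_le => -[xs r] /= hb.
    case: (boolP (P n xs)) => hP //=.
    move: hb; apply: contraLR; rewrite negb_exists => /forallP hne.
    rewrite negbK /L hP inE; apply/forallP => i.
    by have := hne i; rewrite negbK.
  apply: le_trans (prob_or _ _) _; apply: lerD.
    rewrite (@prob_fst _ _ (fun xs => ~~ P n xs) hC).
    set f := fun x : bits (nt n) => log2 #|L' n x|%:R.
    apply: (@le_trans _ _ (prob (fun xs : (t n).-tuple (bits (nt n)) =>
       (t n)%:R * expect f + (nt n)%:R * Num.sqrt (s n * (t n)%:R)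
          < \sum_(i < t n) f (tnth xs i)))).
      apply: prob_le => xs; rewrite /P -ltNge => h.
      have hp : forall i, 0 < (#|L' n (tnth xs i)|%:R : R).
        by move=> i; rewrite ltr0n; apply/card_gt0P; exists (tnth xs i); exact: hL'in.
      have hpp : 0 < \prod_(i < t n) (#|L' n (tnth xs i)|%:R : R).
        by apply: prodr_gt0 => i _; exact: hp.
      have := powR_lt_log2 hpp h; rewrite log2_prod //.
      move=> h'; apply: le_lt_trans h'; rewrite /K lerD2r.
      by apply: ler_wpM2l; [exact: ler0n | exact: hL'exp].
    apply: le_trans (@hoeff_up _ (t n) _ _ _ hT0 (hfL n) (sqrtr_ge0 _)) _.
    by rewrite sqrt_sq_div // ?ltW // ltr0n.
  apply: le_trans (prob_exists (fun i (p : tfold (t n) (bits (nt n)) * coins A n) =>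
     tnth (@run _ A n p.1 p.2) i \notin L' n (tnth p.1 i))) _.
  rewrite -(embed_count (@run _ A n) (L' n) htp hT0 hC).
  apply: ler_wpM2l; first exact: ler0n.
  apply: (@le_trans _ _ (prob (fun p : bits (nt n) * coins (embed_alg A) n =>
     ~~ (@run _ (embed_alg A) n p.1 p.2 \in L' n p.1)))); first exact: lexx.
  rewrite prob_compl //; rewrite /succ_prob in hsucc; lra.
- by exists 0%N => n _; lra.
Qed.

Unset Implicit Arguments.

Theorem lemma5p3
  (nt m : nat -> nat) (F : forall n : nat, bits (nt n) -> bits (m n))
  (t : nat -> nat) (ht : poly_bounded t) :
  (* (i) *)
  (forall k : nat -> R,
     real_shannon_ge F k ->
     forall s : nat -> R, omega_log s -> (forall n, s n < (t n)%:R) ->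
       real_minent_ge (@direct_product nt m t F)
         (fun n => (t n)%:R * k n - (nt n)%:R * Num.sqrt (s n * (t n)%:R)))
  /\
  (* (ii) *)
  (forall Eff : eff_class, closed_under_embed Eff nt t ->
   forall k : nat -> R,
     acc_avg_maxent_le Eff F k ->
     forall s : nat -> R, omega_log s ->
       acc_maxent_le Eff (@direct_product nt m t F)
         (fun n => (t n)%:R * k n + (nt n)%:R * Num.sqrt (s n * (t n)%:R))).
Proof.
split; [exact: part1 | exact: part2].
Qed.
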